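(* Let $\varepsilon>0$ and $n\ge 2$. Consider a colouring of the edges of $\overleftrightarrow{K}_n$ in which at least $(1+\varepsilon)\binom{n}{2}$ edges are blue. Then for every oriented tree $T$ with $|T|\le\lceil\varepsilon n/2\rceil$ there is a copy of $T$ all of whose edges are blue.
   Context: $\overleftrightarrow{K}_n$ is the complete directed graph on $n$ vertices: it has an edge $xy$ for every ordered pair $(x,y)$ of distinct vertices. An oriented tree is a directed graph without loops or bidirected edges whose underlying graph is a tree; $|T|$ is its number of vertices. *)

(* Defs.v *)
From HB Require Import structures.
From mathcomp Require Import all_boot all_order all_algebra.
Set Implicit Arguments. Unset Strict Implicit. Unset Printing Implicit Defensive.
Import Order.TTheory GRing.Theory Num.Theory.

Definition undirected (V : finType) (E : rel V) : rel V :=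
  fun x y => E x y || E y x.

Definition oriented (V : finType) (E : rel V) : Prop :=
  (forall x, ~~ E x x) /\ (forall x y, E x y -> ~~ E y x).

Definition ug_connected (V : finType) (E : rel V) : Prop :=
  forall x y, connect (undirected E) x y.

Definition ug_acyclic (V : finType) (E : rel V) : Prop :=
  forall (c : seq V), 3 <= size c -> uniq c -> ~~ cycle (undirected E) c.

Definition oriented_tree (V : finType) (E : rel V) : Prop :=
  [/\ 0 < #|V|, oriented E, ug_connected E & ug_acyclic E].

Definition blue_copy (n : nat) (blue : rel 'I_n) (V : finType) (E : rel V) : Prop :=
  exists f : V -> 'I_n, injective f /\ (forall x y, E x y -> blue (f x) (f y)).

Definition num_blue (n : nat) (blue : rel 'I_n) : nat :=
  #|[set e : 'I_n * 'I_n | (e.1 != e.2) && blue e.1 e.2]|.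

(* Main.v *)
Require Import Defs.
From HB Require Import structures.
From mathcomp Require Import all_boot all_order all_algebra.
From mathcomp Require Import zify ring lra.
Set Implicit Arguments. Unset Strict Implicit. Unset Printing Implicit Defensive.

Section Leaf.
Variables (V : finType) (r : rel V).
Hypothesis rsym : symmetric r.
Hypothesis rirr : irreflexive r.
Hypothesis racyc : forall c : seq V, 2 < size c -> uniq c -> ~~ cycle r c.
Hypothesis rconn : forall x y, connect r x y.

Lemma noext x p : path r x p -> uniq (x :: p) ->
  (forall z, r x z -> z \in x :: p) -> (exists y, y != x) ->
  exists v u, r v u /\ forall w, r v w -> w = u.
Proof.
move=> Hp Hu Hz [y Hy].
case: p Hp Hu Hz => [|y' q] Hp Hu Hz.
  have /connectP [[|w q] Hq Hl] := rconn x y.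
    by rewrite Hl eqxx in Hy.
  move: Hq => /= /andP [Hxw _].
  have := Hz _ Hxw; rewrite inE => /eqP Ew.
  by rewrite Ew rirr in Hxw.
exists x, y'; split; first by case/andP: Hp.
move=> w Hw.
have := Hz _ Hw; rewrite !inE => /orP [/eqP Ew|/orP [/eqP //|Hwq]].
  by rewrite Ew rirr in Hw.
exfalso.
case/splitPr: Hwq Hp Hu => q1 q2 Hp Hu.
have := racyc (c := x :: y' :: rcons q1 w).
rewrite /= size_rcons !ltnS leq0n => /(_ isT).
have Hu' : uniq (x :: y' :: rcons q1 w).
  move: Hu; rewrite -cat_rcons -!cat_cons cat_uniq.
  by case/andP.
move/(_ Hu') => /negP; apply.
rewrite -cat_rcons -cat_cons cat_path in Hp.
case/andP: Hp => Hp _.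
rewrite /= rcons_path last_rcons (rsym w x) Hw andbT.
by move: Hp => /=.
Qed.

Lemma leaf_ind m : forall x p, #|V| - size (x :: p) <= m -> path r x p -> uniq (x :: p) ->
  (exists y, y != x) ->
  exists v u, r v u /\ forall w, r v w -> w = u.
Proof.
elim: m => [|m IH] x p Hm Hp Hu Hy.
- apply: (noext Hp Hu) Hy => z Hz.
  apply/negPn/negP => Hn.
  have Hu2 : uniq (z :: x :: p) by rewrite /= Hn.
  have := card_uniqP Hu2; move: (max_card (mem (z :: x :: p))) => Hc Hs.
  move: Hc Hm; rewrite Hs /=; lia.
- case: (boolP [exists z, r x z && (z \notin x :: p)]).
    case/existsP => z /andP [Hz Hn].
    apply: (IH z (x :: p)) => //.
    + move: Hm => /=; lia.
    + by rewrite /= rsym Hz.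
    + by rewrite /= Hn.
    + by exists x; apply: contraNneq Hn => ->; rewrite mem_head.
  move/existsPn => H.
  apply: (noext Hp Hu) Hy => z Hz.
  by move: (H z); rewrite Hz /= negbK.
Qed.

Lemma leaf_exists (x y : V) : x != y ->
  exists v u, r v u /\ forall w, r v w -> w = u.
Proof.
move=> Hxy; apply: (@leaf_ind #|V| x [::]) => //.
  by rewrite leq_subr.
by exists y; rewrite eq_sym.
Qed.
End Leaf.

Section Remove.
Variables (V : finType) (r : rel V) (v u : V).
Hypothesis rsym : symmetric r.
Hypothesis rirr : irreflexive r.
Hypothesis racyc : forall c : seq V, 2 < size c -> uniq c -> ~~ cycle r c.
Hypothesis rconn : forall x y, connect r x y.
Hypothesis leaf : forall w, r v w -> w = u.

Definition V' := {x : V | x != v}.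
Definition r' : rel V' := relpre val r.

Lemma lift_path p : forall a : V', path r (val a) p -> all (fun y => y != v) p ->
  forall b : V', val b = last (val a) p -> connect r' a b.
Proof.
elim: p => [|y q IH] a /=.
  by move=> _ _ b /val_inj ->.
move=> /andP [Hay Hp] /andP [Hy Hq] b Hb.
apply: (connect_trans (connect1 (y := exist _ y Hy) _) (IH (exist _ y Hy) Hp Hq b Hb)).
exact: Hay.
Qed.

Lemma conn' (a b : V') : connect r' a b.
Proof.
have /connectP [p Hp Hl] := rconn (val a) (val b).
move: Hl; case/shortenP: Hp => p' Hp' Hu' _ Hl.
apply: (lift_path Hp') => //.
apply/allP => w Hw; apply/negP => /eqP Ew; subst w.
case/splitPr: Hw Hp' Hu' Hl => p1 p2 Hp Hu Hl.
case: p2 Hp Hu Hl => [|w2 p3] Hp Hu Hl.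
  by move: (valP b); rewrite /= Hl last_cat /= eqxx.
rewrite cat_path /= in Hp.
case/and4P: Hp => _ H1 H2 _.
have E1 := leaf H2.
have E2 : last (val a) p1 = u by apply: leaf; rewrite rsym.
move: Hu; rewrite -cat_cons cat_uniq => /and3P [_ /hasPn H _].
have := H w2; rewrite !inE E1 eqxx orbT => /(_ isT).
by rewrite -E2 -in_cons mem_last.
Qed.

Lemma card_V' : #|{: V'}| = #|V|.-1.
Proof. by rewrite card_sig -(cardC1 v). Qed.

Lemma acyc' (c : seq V') : 2 < size c -> uniq c -> ~~ cycle r' c.
Proof.
move=> Hs Hu; rewrite -cycle_map; apply: racyc.
  by rewrite size_map.
by rewrite map_inj_uniq //; apply: val_inj.
Qed.
End Remove.

Section Embed.
Variables (n : nat) (g : rel 'I_n) (S : {set 'I_n}) (d : nat).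
Hypothesis gsym : symmetric g.
Hypothesis girr : irreflexive g.
Hypothesis hS : forall x, x \in S -> d <= #|[set y in S | g x y]|.
Variables (x0 : 'I_n).
Hypothesis Hx0 : x0 \in S.

Lemma embed k : forall (V : finType) (r : rel V), #|V| = k.+1 -> k <= d ->
  symmetric r -> irreflexive r -> (forall x y, connect r x y) ->
  (forall c : seq V, 2 < size c -> uniq c -> ~~ cycle r c) ->
  exists f : V -> 'I_n, [/\ injective f, forall x, f x \in S &
     forall x y, r x y -> g (f x) (f y)].
Proof.
elim: k => [|k IH] V r HV Hk rsym rirr rconn racyc.
  have Heq : forall x y : V, x = y.
    move=> x y; apply/eqP; apply/negPn/negP => Hxy.
    have : 1 < #|V| by apply/card_gt1P; exists x, y.
    by rewrite HV.
  exists (fun _ => x0); split => // x y.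
  by rewrite (Heq x y) rirr.
have [x1 [y1 Hxy1]] : exists x y : V, x != y.
  have : 1 < #|V| by rewrite HV.
  by case/card_gt1P => x [y [_ _ H]]; exists x, y.
have [v [u [Hvu leaf]]] := leaf_exists rsym rirr racyc rconn Hxy1.
have Huv : u != v by apply: contraTneq Hvu => ->; rewrite rirr.
have HV' : #|{: V' v}| = k.+1 by rewrite card_V' HV.
have [f' [f'inj f'S f'e]] := IH (V' v) (@r' V r v) HV'
  (ltnW Hk) (fun a b => rsym _ _) (fun a => rirr _)
  (conn' rsym rconn leaf) (acyc' racyc).
pose u' : V' v := exist _ u Huv.
pose N := [set y in S | g (f' u') y].
have [z Hz Hzn] : exists2 z, z \in N & z \notin [set f' a | a : V' v].
  case: (boolP [exists z, (z \in N) && (z \notin [set f' a | a : V' v])]).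
    by case/existsP => z /andP [H1 H2]; exists z.
  move/existsPn => H; exfalso.
  have Hsub : N \subset [set f' a | a : V' v] :\ f' u'.
    apply/subsetP => y Hy; rewrite !inE.
    move: (H y); rewrite Hy /= negbK => ->; rewrite andbT.
    apply: contraTneq Hy => ->; by rewrite inE girr andbF.
  have := subset_leq_card Hsub.
  have := cardsD1 (f' u') [set f' a | a : V' v].
  rewrite card_imset // imset_f // HV' /= => E1 E2.
  have := hS (f'S u'); rewrite -/N.
  move: Hk E1 E2; move: #|N| #|_ :\ _| => a b; lia.
move: Hz; rewrite inE => /andP [HzS Hgz].
exists (fun x => if x == v then z else f' (insubd u' x)); split.
- move=> x y /=.
  case: (eqVneq x v) => [->|Hx]; case: (eqVneq y v) => [->|Hy] //.
  + by move=> Ez; move: Hzn; rewrite Ez imset_f.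
  + by move=> Ez; move: Hzn; rewrite -Ez imset_f.
  + move/f'inj => Ei.
    by rewrite -(insubdK u' (Hx : x \in [pred x | x != v])) Ei insubdK.
- by move=> x; case: (x == v).
- move=> x y Hxy.
  case: (eqVneq x v) => [Ex|Hx]; case: (eqVneq y v) => [Ey|Hy].
  + by move: Hxy; rewrite Ex Ey rirr.
  + subst x; have Ey := leaf _ Hxy; subst y.
    rewrite (_ : insubd u' u = u'); first by rewrite gsym.
    by apply: val_inj; rewrite insubdK.
  + subst y; have Ex := leaf _ (etrans (rsym _ _) Hxy); subst x.
    rewrite (_ : insubd u' u = u') //.
    by apply: val_inj; rewrite insubdK.
  + apply: f'e; rewrite /r' /relpre /=.
    by rewrite !insubdK.
Qed.
End Embed.

Section Peel.
Variables (n : nat) (g : rel 'I_n) (d : nat).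
Hypothesis gsym : symmetric g.
Hypothesis girr : irreflexive g.

Definition deg (S : {set 'I_n}) a := \sum_(b in S) (g a b : nat).
Definition Dsum (S : {set 'I_n}) := \sum_(a in S) deg S a.

Lemma deg_card (S : {set 'I_n}) a : deg S a = #|[set b in S | g a b]|.
Proof.
rewrite /deg -sum1_card [RHS]big_mkcond [LHS]big_mkcond /=.
by apply: eq_bigr => b _; rewrite inE; case: (b \in S); case: (g a b).
Qed.

Lemma deg_D1 (S : {set 'I_n}) x a : x \in S -> deg S a = g a x + deg (S :\ x) a.
Proof.
move=> Hx; rewrite /deg (bigD1 x) //=; congr (_ + _).
by apply: eq_bigl => b; rewrite in_setD1 andbC.
Qed.

Lemma D_D1 (S : {set 'I_n}) x : x \in S -> Dsum S = Dsum (S :\ x) + (deg S x).*2.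
Proof.
move=> Hx; rewrite /Dsum (bigD1 x) //=.
rewrite (eq_bigr (fun a => g a x + deg (S :\ x) a)); last by move=> a _; exact: deg_D1.
rewrite big_split /=.
have -> : \sum_(i in S | i != x) deg (S :\ x) i = \sum_(a in S :\ x) deg (S :\ x) a.
  by apply: eq_bigl => b; rewrite in_setD1 andbC.
have -> : \sum_(i in S | i != x) (g i x : nat) = deg S x.
  rewrite /deg [in RHS](bigD1 x) //= girr add0n.
  by apply: eq_bigr => b _; rewrite gsym.
by rewrite -addnn addnA addnC.
Qed.

Lemma peel m : forall S : {set 'I_n}, #|S| = m -> d.*2 * #|S| < Dsum S + #|S| ->
  exists S', S' != set0 /\ forall x, x \in S' -> d <= deg S' x.
Proof.
elim: m => [|m IH] S HS Hlt.
  move: Hlt; rewrite HS muln0 addn0 /Dsum.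
  have -> : S = set0 by apply/eqP; rewrite -cards_eq0 HS.
  by rewrite big_set0.
case: (boolP [exists x, (x \in S) && (deg S x < d)]).
  case/existsP => x /andP [Hx Hd].
  apply: (IH (S :\ x)).
    by move: HS; rewrite (cardsD1 x) Hx /=; lia.
  move: Hlt; rewrite (D_D1 Hx) (cardsD1 x S) Hx /=.
  move: Hd; rewrite -!muln2; move: (Dsum _) (deg S x) #|S :\ x| => a b c.
  nia.
move/existsPn => H; exists S; split.
  by rewrite -card_gt0 HS.
by move=> x Hx; move: (H x); rewrite Hx /= -leqNgt.
Qed.
End Peel.


Definition dbl n (blue : rel 'I_n) : rel 'I_n := fun x y => (x != y) && blue x y && blue y x.

Lemma dbl_sym n (blue : rel 'I_n) : symmetric (dbl blue).
Proof. by move=> x y; rewrite /dbl eq_sym; case: (blue x y); case: (blue y x); rewrite ?andbF. Qed.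

Lemma dbl_irr n (blue : rel 'I_n) : irreflexive (dbl blue).
Proof. by move=> x; rewrite /dbl eqxx. Qed.

Lemma num_blue_sum n (blue : rel 'I_n) :
  num_blue blue = \sum_x \sum_y ((x != y) && blue x y : nat).
Proof.
rewrite /num_blue -sum1_card big_mkcond /= pair_bigA /=.
by apply: eq_bigr => p _; rewrite inE; case: ((p.1 != p.2) && blue p.1 p.2).
Qed.

Lemma sum_neq n : \sum_(x : 'I_n) \sum_(y : 'I_n) ((x != y) : nat) = n * n.-1.
Proof.
rewrite (eq_bigr (fun _ => n.-1)).
  by rewrite sum_nat_const card_ord.
move=> x _; rewrite (bigD1 x) //= eqxx add0n.
rewrite (eq_bigr (fun _ => 1)); last by move=> y; rewrite eq_sym => ->.
by rewrite sum1_card cardC1 card_ord.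
Qed.

Lemma count_blue n (blue : rel 'I_n) :
  (num_blue blue).*2 <= n * n.-1 + Dsum (dbl blue) setT /\ num_blue blue <= n * n.-1.
Proof.
have HD : Dsum (dbl blue) setT = \sum_x \sum_y (dbl blue x y : nat).
  rewrite /Dsum; apply: eq_big => [x|x _]; first by rewrite in_setT.
  by rewrite /deg; apply: eq_bigl => y; rewrite in_setT.
split.
  rewrite -addnn num_blue_sum {2}exchange_big /= -big_split /= HD -sum_neq -big_split /=.
  apply: leq_sum => x _; rewrite -big_split -big_split /=; apply: leq_sum => y _.
  rewrite /dbl (eq_sym y x); case: (x != y); case: (blue x y); case: (blue y x) => //.
rewrite num_blue_sum -sum_neq; apply: leq_sum => x _; apply: leq_sum => y _.
by case: (x != y); case: (blue x y).
Qed.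

Lemma bin2_2 n : 'C(n, 2) * 2 = n * n.-1.
Proof.
rewrite bin2 muln2 halfK.
case: n => // m /=; rewrite oddM /=.
by rewrite andNb subn0.
Qed.

Unset Implicit Arguments.
Import Order.TTheory GRing.Theory Num.Theory.
Local Open Scope ring_scope.

Theorem mainTheorem9 (R : archiRealFieldType) (eps : R) (n : nat)
  (blue : rel 'I_n) :
  0 < eps -> (2 <= n)%N ->
  (1 + eps) * ('C(n, 2))%:R <= (num_blue blue)%:R ->
  forall (V : finType) (E : rel V),
    oriented_tree E ->
    (#|V|%:Z <= Num.ceil (eps * n%:R / 2)) ->
    blue_copy blue E.
Proof.
move=> He Hn Hb V E [HV [Eirr Easym] Econn Eacyc] Hc.
have [Hcnt1 Hcnt2] := count_blue blue.
have HC := bin2_2 n.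
have Cpos : (0 < 'C(n, 2))%N by rewrite bin_gt0.
set B := num_blue blue in Hb Hcnt1 Hcnt2.
set D := Dsum (dbl blue) setT in Hcnt1.

have nR0 : 0 < (n%:R : R) by rewrite ltr0n; lia.
have HCr : ('C(n, 2))%:R * 2 = (n%:R : R) * (n%:R - 1).
  have := congr1 (fun k => k%:R : R) HC; rewrite /= !natrM => ->.
  congr (_ * _); rewrite -subn1 natrB //; lia.
have Cr0 : 0 < ('C(n, 2))%:R :> R by rewrite ltr0n.
have Hc2 : (B%:R : R) <= n%:R * (n%:R - 1).
  by rewrite -HCr -natrM ler_nat HC.
have Hc1 : 2 * (B%:R : R) <= n%:R * (n%:R - 1) + D%:R.
  by rewrite -HCr -(natrM R 'C(n, 2) 2) -natrD -(natrM R 2 B) ler_nat HC mul2n.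
have He1 : eps <= 1 by nra.
have HD : eps * n%:R * (n%:R - 1) <= D%:R by nra.
have := ceilB1_lt (eps * n%:R / 2).
have := Hc; have : 0 < Num.ceil (eps * n%:R / 2).
  by rewrite ceil_gt0 divr_gt0 // mulr_gt0.
move: (Num.ceil _) => c.
case: c => [[|d]|d] //= _; rewrite ?lez_nat => HVd Hlt.
have Hlt' : (d%:R : R) < eps * n%:R / 2.
  have Ed : ((d.+1)%:Z - 1 = d%:Z)%R by rewrite -addn1 PoszD addrK.
  by move: Hlt; rewrite Ed.
have Hineq : (d.*2 * #|[set: 'I_n]| < D + #|[set: 'I_n]|)%N.
  rewrite cardsT card_ord -(ltr_nat R) natrD natrM -muln2 natrM.
  nra.
have [S [HS0 HSd]] := peel (dbl_sym blue) (dbl_irr blue) erefl Hineq.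
have [x0 Hx0] := set0Pn _ HS0.
have hS : forall x, x \in S -> (d <= #|[set y in S | dbl blue x y]|)%N.
  by move=> x Hx; rewrite -deg_card; apply: HSd.
have [k Hk] : exists k, #|V| = k.+1 by exists #|V|.-1; rewrite prednK.
have HkD : (k <= d)%N by move: HVd; rewrite Hk.
have rsym : symmetric (undirected E) by move=> x y; rewrite /undirected orbC.
have rirr : irreflexive (undirected E) by move=> x; rewrite /undirected orbb (negbTE (Eirr x)).
have [f [finj _ fe]] := embed (dbl_sym blue) (dbl_irr blue) hS Hx0 Hk HkD rsym rirr Econn Eacyc.
exists f; split => // x y Hxy.
have := fe x y; rewrite /undirected Hxy /= => /(_ isT).
by rewrite /dbl => /andP [/andP [_ ->]].
Qed.
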